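(* Let $A\in\mathbb Z_{\ge0}^{m\times m}$, $B\in\mathbb Z_{\ge0}^{n\times n}$, $C\in\mathbb Z_{\ge0}^{p\times p}$ and nonnegative integer matrices $R_1,S_1,R_2,S_2,R_3,S_3$ of compatible sizes with $A=R_1S_1$, $B=S_1R_1$, $B=R_2S_2$, $C=S_2R_2$, $A=R_3S_3$, $C=S_3R_3$, satisfying the triangle equations $R_1R_2=R_3$, $R_2S_3=S_1$, $S_3R_1=S_2$. Then the restricted matrices also form such a triangle: with $A'=A_{J_A\times J_A}$, $B'=B_{J_B\times J_B}$, $C'=C_{J_C\times J_C}$, $R_1'=(R_1)_{J_A\times J_B}$, $S_1'=(S_1)_{J_B\times J_A}$, $R_2'=(R_2)_{J_B\times J_C}$, $S_2'=(S_2)_{J_C\times J_B}$, $R_3'=(R_3)_{J_A\times J_C}$, $S_3'=(S_3)_{J_C\times J_A}$ we have $A'=R_1'S_1'$, $B'=S_1'R_1'$, $B'=R_2'S_2'$, $C'=S_2'R_2'$, $A'=R_3'S_3'$, $C'=S_3'R_3'$ and $R_1'R_2'=R_3'$, $R_2'S_3'=S_1'$, $S_3'R_1'=S_2'$.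
   Context: For a matrix $M$ and index sets $K,L$, $M_{K\times L}$ is the submatrix with rows in $K$ and columns in $L$. For a square matrix $A\in\mathbb Z_{\ge0}^{m\times m}$, $J_A\subseteq\{1,\dots,m\}$ is the set of indices $i$ such that for every $k\ge1$ the $i$-th row and the $i$-th column of $A^k$ are nonzero (the indices occurring in bi-infinite paths of the graph with adjacency matrix $A$). *)

(* Defs.v *)
From mathcomp Require Import all_boot all_order all_algebra.
From mathcomp Require Import boolp.
Set Implicit Arguments. Unset Strict Implicit. Unset Printing Implicit Defensive.
Import GRing.Theory.
Local Open Scope ring_scope.

Definition mxpow (m : nat) (A : 'M[nat]_m) (k : nat) : 'M[nat]_m :=
  iter k (mulmx A) 1%:M.

Definition JA (m : nat) (A : 'M[nat]_m) : {set 'I_m} :=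
  [set i | `[< forall k : nat, (0 < k)%N ->
              (exists j, mxpow A k i j != 0%N) /\ (exists j, mxpow A k j i != 0%N) >]].

(* M_{K x L}: rows indexed by K and columns by L, both in increasing order. *)
Definition restrmx (m n : nat) (K : {set 'I_m}) (L : {set 'I_n}) (M : 'M[nat]_(m, n))
  : 'M[nat]_(#|K|, #|L|) :=
  \matrix_(i < #|K|, j < #|L|) M (enum_val i) (enum_val j).

(* Main.v *)
Require Import Defs.
From mathcomp Require Import all_boot all_order all_algebra.
From mathcomp Require Import boolp.
Local Open Scope ring_scope.

Lemma mxpowS (m : nat) (A : 'M[nat]_m) t : mxpow A t.+1 = A *m mxpow A t.
Proof. by []. Qed.

Lemma mxpowSr (m : nat) (A : 'M[nat]_m) t : mxpow A t.+1 = mxpow A t *m A.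
Proof.
elim: t => [|t IH]; first by rewrite mxpowS /mxpow /= mulmx1 mul1mx.
by rewrite mxpowS {1}IH mulmxA -mxpowS.
Qed.

Lemma mxpow_conj (m n : nat) (X : 'M[nat]_(m, n)) (Y : 'M[nat]_(n, m)) t :
  mxpow (Y *m X) t.+1 = Y *m mxpow (X *m Y) t *m X.
Proof.
elim: t => [|t IH]; first by rewrite mxpowS /mxpow /= mulmx1 mulmx1.
by rewrite mxpowS IH mxpowS !mulmxA.
Qed.

Lemma inJA (m : nat) (A : 'M[nat]_m) i :
  (i \in JA A) <-> (forall k : nat, (0 < k)%N ->
     (exists j, mxpow A k i j != 0%N) /\ (exists j, mxpow A k j i != 0%N)).
Proof. by rewrite inE; split => [/asboolP|H]; last apply/asboolP. Qed.

Lemma sum_neq0 (I : finType) (F : I -> nat) :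
  (\sum_i F i)%R != 0%N -> exists i, F i != 0%N.
Proof.
move=> H; apply/existsP; move: H; apply: contraR => /existsPn H.
by rewrite sum_nat_eq0; apply/forallP => i; have := H i; case: (F i).
Qed.

Lemma sum_ge (I : finType) (F : I -> nat) i : (F i <= (\sum_j F j)%R)%N.
Proof. by rewrite (bigD1 i) //= leq_addr. Qed.
Arguments sum_ge {I} F i.

Lemma mulnat_neq0 (a b : nat) : (a * b)%R != 0%N -> (a != 0%N) /\ (b != 0%N).
Proof. by move=> H; split; apply: contraNneq H => ->; rewrite ?GRing.mul0r ?GRing.mulr0. Qed.

Lemma mulnat_pos (a b : nat) : a != 0%N -> b != 0%N -> (a * b)%R != 0%N.
Proof. by case: a => // a; case: b => // b. Qed.

Lemma row_cond (m n : nat) (X : 'M[nat]_(m, n)) (Y : 'M[nat]_(n, m)) k j :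
  j \in JA (X *m Y) -> Y k j != 0%N -> forall t, (0 < t)%N ->
  exists l, mxpow (Y *m X) t k l != 0%N.
Proof.
move=> /inJA HJ Ykj [//|s] _.
have [[l' Hl'] _] := HJ s.+1 erefl.
move: Hl'; rewrite mxpowSr mulmxA mxE => /sum_neq0 [l /mulnat_neq0 [Hl _]].
exists l; rewrite mxpow_conj -mulmxA mxE.
rewrite -lt0n; apply: (leq_trans _ (sum_ge (fun j0 => Y k j0 * (mxpow (X *m Y) s *m X) j0 l) j)).
by rewrite lt0n; apply: mulnat_pos.
Qed.

Arguments row_cond {m n X Y k j}.
Lemma col_cond (m n : nat) (X : 'M[nat]_(m, n)) (Y : 'M[nat]_(n, m)) k i :
  i \in JA (X *m Y) -> X i k != 0%N -> forall t, (0 < t)%N ->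
  exists l, mxpow (Y *m X) t l k != 0%N.
Proof.
move=> /inJA HJ Xik [//|s] _.
have [_ [l' Hl']] := HJ s.+1 erefl.
move: Hl'; rewrite mxpowS -mulmxA mxE => /sum_neq0 [l /mulnat_neq0 [_ Hl]].
exists l; rewrite mxpow_conj mxE.
rewrite -lt0n; apply: (leq_trans _ (sum_ge (fun j0 => (Y *m mxpow (X *m Y) s) l j0 * X j0 k) i)).
by rewrite lt0n; apply: mulnat_pos.
Qed.

Arguments col_cond {m n X Y k i}.
Lemma restr_mul (m n q : nat) (X : 'M[nat]_(m, n)) (Y : 'M[nat]_(n, q))
  (I : {set 'I_m}) (J : {set 'I_n}) (K : {set 'I_q}) :
  (forall i k l, i \in I -> l \in K -> (X i k * Y k l)%R != 0%N -> k \in J) ->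
  restrmx I K (X *m Y) = restrmx I J X *m restrmx J K Y.
Proof.
move=> H; apply/matrixP => a b; rewrite !mxE.
under [RHS]eq_bigr do rewrite !mxE.
rewrite -(big_enum_val (fun k => X (enum_val a) k * Y k (enum_val b))).
rewrite (bigID (mem J)) /= [X in (_ + X)%R]big1 ?GRing.addr0 // => k Hk.
apply/eqP; apply: contraNT Hk => Hne.
by apply: (H _ _ _ (enum_valP a) (enum_valP b) Hne).
Qed.

Lemma memJ (m n q r s : nat) (P1 : 'M[nat]_r) (P2 : 'M[nat]_s) (Q : 'M[nat]_n)
  (Xr : 'M[nat]_(r, n)) (Yr : 'M[nat]_(n, r))
  (Xc : 'M[nat]_(s, n)) (Yc : 'M[nat]_(n, s)) k l i :
  Q = Yr *m Xr -> P1 = Xr *m Yr -> Q = Yc *m Xc -> P2 = Xc *m Yc ->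
  l \in JA P1 -> Yr k l != 0%N -> i \in JA P2 -> Xc i k != 0%N -> k \in JA Q.
Proof.
move=> hQ1 hP1 hQ2 hP2 hl hY hi hX; apply/inJA => t ht; split.
  by rewrite hQ1; apply: (row_cond (_ : l \in JA (Xr *m Yr)) hY t ht); rewrite -hP1.
by rewrite hQ2; apply: (col_cond (_ : i \in JA (Xc *m Yc)) hX t ht); rewrite -hP2.
Qed.

Lemma J_crit (n r s : nat) (P1 : 'M[nat]_r) (P2 : 'M[nat]_s) (Q : 'M[nat]_n)
  (Xr : 'M[nat]_(r, n)) (Yr : 'M[nat]_(n, r))
  (Xc : 'M[nat]_(s, n)) (Yc : 'M[nat]_(n, s)) :
  Q = Yr *m Xr -> P1 = Xr *m Yr -> Q = Yc *m Xc -> P2 = Xc *m Yc ->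
  forall i k l, i \in JA P2 -> l \in JA P1 -> (Xc i k * Yr k l)%R != 0%N -> k \in JA Q.
Proof.
move=> e1 e2 e3 e4 i k l hi hl /mulnat_neq0 [h1 h2].
exact: (@memJ 0 n 0 r s P1 P2 Q Xr Yr Xc Yc k l i e1 e2 e3 e4 hl h2 hi h1).
Qed.

Arguments J_crit {n r s P1 P2 Q Xr Yr Xc Yc}.

Theorem mainTheorem14 (m n p : nat)
  (A : 'M[nat]_m) (B : 'M[nat]_n) (C : 'M[nat]_p)
  (R1 : 'M[nat]_(m, n)) (S1 : 'M[nat]_(n, m))
  (R2 : 'M[nat]_(n, p)) (S2 : 'M[nat]_(p, n))
  (R3 : 'M[nat]_(m, p)) (S3 : 'M[nat]_(p, m))
  (hA1 : A = R1 *m S1) (hB1 : B = S1 *m R1)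
  (hB2 : B = R2 *m S2) (hC2 : C = S2 *m R2)
  (hA3 : A = R3 *m S3) (hC3 : C = S3 *m R3)
  (t1 : R1 *m R2 = R3) (t2 : R2 *m S3 = S1) (t3 : S3 *m R1 = S2) :
  let JA' := JA A in let JB := JA B in let JC := JA C in
  let A' := restrmx JA' JA' A in let B' := restrmx JB JB B in let C' := restrmx JC JC C in
  let R1' := restrmx JA' JB R1 in let S1' := restrmx JB JA' S1 in
  let R2' := restrmx JB JC R2 in let S2' := restrmx JC JB S2 in
  let R3' := restrmx JA' JC R3 in let S3' := restrmx JC JA' S3 in
  (A' = R1' *m S1' /\ B' = S1' *m R1' /\ B' = R2' *m S2' /\
   C' = S2' *m R2' /\ A' = R3' *m S3' /\ C' = S3' *m R3') /\
  (R1' *m R2' = R3' /\ R2' *m S3' = S1' /\ S3' *m R1' = S2').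
Proof.
move=> JA' JB JC A' B' C' R1' S1' R2' S2' R3' S3'.
split; [split; [|split; [|split; [|split; [|split]]]] | split; [|split]].
- rewrite /A' {1}hA1; apply: restr_mul; exact: (J_crit hB1 hA1 hB1 hA1).
- rewrite /B' {1}hB1; apply: restr_mul; exact: (J_crit hA1 hB1 hA1 hB1).
- rewrite /B' {1}hB2; apply: restr_mul; exact: (J_crit hC2 hB2 hC2 hB2).
- rewrite /C' {1}hC2; apply: restr_mul; exact: (J_crit hB2 hC2 hB2 hC2).
- rewrite /A' {1}hA3; apply: restr_mul; exact: (J_crit hC3 hA3 hC3 hA3).
- rewrite /C' {1}hC3; apply: restr_mul; exact: (J_crit hA3 hC3 hA3 hC3).
- rewrite /R3' -t1; symmetry; apply: restr_mul; exact: (J_crit hB2 hC2 hB1 hA1).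
- rewrite /S1' -t2; symmetry; apply: restr_mul; exact: (J_crit hC3 hA3 hC2 hB2).
- rewrite /S2' -t3; symmetry; apply: restr_mul; exact: (J_crit hA1 hB1 hA3 hC3).
Qed.
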